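(* Let $p<q$ be coprime positive integers and $m$ a positive integer such that $q-p$ divides $m$; put $a=m/(q-p)$. Let $A=\mathbb C[X_0,X_1,X_2,X_3,X_4]$ with the $\mathbb Z\times\mathbb Z/m\mathbb Z$-grading in which $X_0$ has degree $(1,0)$, $X_1,X_2$ have degree $(-p,-1)$ and $X_3,X_4$ have degree $(q,1)$. For $s\in\mathbb C$ let $$J_s=(X_0^{q-p},\;X_2,\;X_4,\;s-X_1^{aq}X_3^{ap})\subset A.$$ Then for every $s\in\mathbb C$ and every $(n,d)\in\mathbb Z\times\mathbb Z/m\mathbb Z$ one has $\dim_{\mathbb C}(A/J_s)_{(n,d)}=1$.
   Context: The grading is the weight grading for the action of $G_0\times G_m$ ($G_0\cong\mathbb C^*$, $G_m\cong\mu_m$) on $\mathbb C^5$ given by $t\cdot(x_0,\dots,x_4)=(tx_0,t^{-p}x_1,t^{-p}x_2,t^qx_3,t^qx_4)$ and $\zeta\cdot(x_0,\dots,x_4)=(x_0,\zeta^{-1}x_1,\zeta^{-1}x_2,\zeta x_3,\zeta x_4)$. The condition that $q-p$ divides $m$ is exactly the condition that the associated Popov $SL(2)$-variety $E_{p/q,m}$ is toric. *)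

(* Defs.v *)
From HB Require Import structures.
From mathcomp Require Import all_boot all_order all_algebra.
From mathcomp Require Import mpoly.
Set Implicit Arguments. Unset Strict Implicit. Unset Printing Implicit Defensive.
Import Order.TTheory GRing.Theory Num.Theory.
Local Open Scope ring_scope.

(* The first component (in Z) and an integer representative of the second
   component (in Z/mZ; reduced mod m where used). *)
Definition wdegZ (p q : nat) (mo : 'X_{1..5}) : int :=
  (mo ord0)%:Z - (p%:Z) * ((mo (inord 1))%:Z + (mo (inord 2))%:Z)
  + (q%:Z) * ((mo (inord 3))%:Z + (mo (inord 4))%:Z).

Definition wdegZm (mo : 'X_{1..5}) : int :=
  - ((mo (inord 1))%:Z + (mo (inord 2))%:Z) + ((mo (inord 3))%:Z + (mo (inord 4))%:Z).

(* f is homogeneous of degree (n, d mod m) for the Z x Z/mZ grading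
   (the zero polynomial is homogeneous of every degree). *)
Definition homog_of (K : fieldType) (p q m : nat) (n d : int) (f : {mpoly K[5]}) : Prop :=
  forall mo, mo \in msupp f -> wdegZ p q mo = n /\ (wdegZm mo = d %[mod m%:Z])%Z.

Definition in_ideal (K : fieldType) (k : nat) (g : 'I_k -> {mpoly K[5]}) (f : {mpoly K[5]}) : Prop :=
  exists c : 'I_k -> {mpoly K[5]}, f = \sum_(i < k) c i * g i.

Definition Jgens (K : fieldType) (p q a : nat) (s : K) : 'I_4 -> {mpoly K[5]} :=
  fun i => match val i with
           | 0%N => 'X_(inord 0) ^+ (q - p)
           | 1%N => 'X_(inord 2)
           | 2%N => 'X_(inord 4)
           | _ => s%:MP - 'X_(inord 1) ^+ (a * q) * 'X_(inord 3) ^+ (a * p)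
           end.

(* dim_K (A/J)_{(n,d)} = 1, where (A/J)_{(n,d)} is the image in A/J of the
   homogeneous component A_{(n,d)}: this image has a basis consisting of one
   element, i.e. it is spanned by the class of some homogeneous f of degree
   (n,d) whose class is nonzero. *)
Definition graded_quot_dim1 (K : fieldType) (inJ : {mpoly K[5]} -> Prop)
    (hom : {mpoly K[5]} -> Prop) : Prop :=
  exists f, [/\ hom f, ~ inJ f & forall h, hom h -> exists c : K, inJ (h - c *: f)].

(* Main.v *)
Require Import Defs.
From HB Require Import structures.
From mathcomp Require Import all_boot all_order all_algebra.
From mathcomp Require Import mpoly.
From mathcomp Require Import zify ring lra intdiv.
Import Order.TTheory GRing.Theory Num.Theory.
Local Open Scope ring_scope.
Definition sol (p q a : nat) (n d : int) (i j k : nat) : Prop :=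
  (i < q - p)%N /\ i%:Z - p%:Z * j%:Z + q%:Z * k%:Z = n /\
  exists v : int, k%:Z - j%:Z - d = v * (a%:Z * (q%:Z - p%:Z)).

Lemma sol_line p q a n d i j k i' j' k' : (p < q)%N ->
  sol p q a n d i j k -> sol p q a n d i' j' k' ->
  i = i' /\ exists u : int, j'%:Z = j%:Z + u * (a%:Z * q%:Z) /\ k'%:Z = k%:Z + u * (a%:Z * p%:Z).
Proof.
move=> hpq [hi [e1 [v e2]]] [hi' [e1' [v' e2']]].
have E : k'%:Z = k%:Z + (j'%:Z - j%:Z + (v' - v) * (a%:Z * (q%:Z - p%:Z))).
  by rewrite mulrBl -e2 -e2'; ring.
have Ei : i%:Z = n + p%:Z * j%:Z - q%:Z * k%:Z by rewrite -e1; ring.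
have Ei' : i'%:Z = n + p%:Z * j'%:Z - q%:Z * k'%:Z by rewrite -e1'; ring.
have hii : i%:Z - i'%:Z = (q%:Z - p%:Z) * (j'%:Z - j%:Z + q%:Z * a%:Z * (v' - v)).
  by rewrite Ei Ei' E; ring.
have hii' : i = i'.
  move: hii; set w := (_ + _ * _ * _) => hii.
  have hr : (0 < q%:Z - p%:Z) by lia.
  have [hw|[hw|hw]] : w = 0 \/ 1 <= w \/ w <= -1 by lia.
  - by move: hii; rewrite hw mulr0; lia.
  - have : (q%:Z - p%:Z) * 1 <= (q%:Z - p%:Z) * w by rewrite ler_pM2l.
    lia.
  - have : (q%:Z - p%:Z) * w <= (q%:Z - p%:Z) * -1 by rewrite ler_pM2l.
    lia.
split=> //; exists (v - v').
have Ej : j'%:Z = j%:Z + (v - v') * (a%:Z * q%:Z).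
  have hr : (q%:Z - p%:Z) != 0 by lia.
  have h0 : (j'%:Z - j%:Z + q%:Z * a%:Z * (v' - v)) = 0.
    apply/eqP; move: hii; rewrite hii' subrr => /esym/eqP.
    by rewrite mulf_eq0 (negbTE hr).
  lia.
split=> //; rewrite E Ej; ring.
Qed.

Lemma sol_exists p q a n d : (0 < p)%N -> (p < q)%N -> (0 < a)%N ->
  exists i j k, sol p q a n d i j k.
Proof.
move=> hp hpq ha.
set r := q%:Z - p%:Z.
have rn0 : r != 0 by rewrite /r; lia.
set x := n - q%:Z * d.
set i0 := (x %% r)%Z. set J0 := (x %/ r)%Z.
have hx : x = J0 * r + i0 by exact: divz_eq.
have hi0 : 0 <= i0 by exact: modz_ge0.
have hi0r : i0 < r by move: (ltz_mod x rn0); rewrite /r; lia.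
set U := `|J0| + `|d|.
have hU1 : `|J0| <= U by rewrite /U; lia.
have hU2 : `|d| <= U by rewrite /U; lia.
have hU0 : 0 <= U by rewrite /U; lia.
have haq : 1 <= a%:Z * q%:Z by nia.
have hap : 1 <= a%:Z * p%:Z by nia.
have hj : 0 <= J0 + U * (a%:Z * q%:Z).
  have : U * 1 <= U * (a%:Z * q%:Z) by apply: ler_wpM2l.
  move: (ler_norm (- J0)); rewrite normrN; lia.
have hk : 0 <= J0 + d + U * (a%:Z * p%:Z).
  have : U * 1 <= U * (a%:Z * p%:Z) by apply: ler_wpM2l.
  move: (ler_norm (- J0)) (ler_norm (- d)); rewrite !normrN; lia.
exists (absz i0), (absz (J0 + U * (a%:Z * q%:Z))), (absz (J0 + d + U * (a%:Z * p%:Z))).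
rewrite /sol !gez0_abs //.
split; first by lia.
split.
  rewrite -[n](subrK (q%:Z * d)) -/x hx /r; ring.
exists (- U); rewrite /r; ring.
Qed.

Lemma sol_descent p q a n d : (0 < p)%N -> (p < q)%N -> (0 < a)%N ->
  forall N i j k, (j <= N)%N -> sol p q a n d i j k ->
  exists i0 j0 k0, sol p q a n d i0 j0 k0 /\ ~~ ((a * q <= j0) && (a * p <= k0))%N.
Proof.
move=> hp hpq ha; elim=> [|N IH] i j k hj hs.
  exists i, j, k; split=> //; apply/negP => /andP [h1 _].
  have : (0 < a * q)%N by rewrite muln_gt0 ha; lia.
  lia.
case: (boolP ((a * q <= j) && (a * p <= k))%N); last by exists i, j, k.
move=> /andP [h1 h2].
apply: (IH i (j - a * q)%N (k - a * p)%N).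
  have : (0 < a * q)%N by rewrite muln_gt0 ha; lia.
  lia.
have Ej : Posz (j - a * q)%N = Posz j - Posz a * Posz q by rewrite -PoszM subzn.
have Ek : Posz (k - a * p)%N = Posz k - Posz a * Posz p by rewrite -PoszM subzn.
case: hs => [hi [e1 [v e2]]]; split=> //; rewrite Ej Ek; split.
  by rewrite -e1; ring.
exists (v + 1); rewrite mulrDl -e2; ring.
Qed.

Lemma sol_min p q a n d : (0 < p)%N -> (p < q)%N -> (0 < a)%N ->
  exists i0 j0 k0, [/\ sol p q a n d i0 j0 k0, ~~ ((a * q <= j0) && (a * p <= k0))%N &
   forall i j k, sol p q a n d i j k -> i = i0 /\ exists t : nat, j = (j0 + t * (a * q))%N /\ k = (k0 + t * (a * p))%N].
Proof.
move=> hp hpq ha.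
have [i [j [k hs]]] := sol_exists _ _ _ n d hp hpq ha.
have [i0 [j0 [k0 [hs0 hmin]]]] := sol_descent _ _ _ n d hp hpq ha _ _ _ _ (leqnn j) hs.
exists i0, j0, k0; split=> // i' j' k' hs'.
have [<- [u [Ej Ek]]] := sol_line _ _ _ _ _ _ _ _ _ _ _ hpq hs0 hs'.
split=> //.
have hu : 0 <= u.
  rewrite leNgt; apply/negP => hu.
  move: hmin; rewrite negb_and -!ltnNge => /orP [] h.
  - have : u * (a%:Z * q%:Z) <= -1 * (a%:Z * q%:Z) by rewrite ler_pM2r; [lia | nia].
    lia.
  - have : u * (a%:Z * p%:Z) <= -1 * (a%:Z * p%:Z) by rewrite ler_pM2r; [lia | nia].
    lia.
exists (absz u).
have hu' : Posz (absz u) = u by rewrite gez0_abs.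
split; apply/eqP; rewrite -eqz_nat PoszD PoszM hu' ?Ej ?Ek; apply/eqP; ring.
Qed.
Definition mono (i j k : nat) : 'X_{1..5} :=
  [multinom (match nat_of_ord l with 0 => i | 1 => j | 3 => k | _ => 0 end)%N | l < 5].

Lemma monoE i j k (l : 'I_5) : mono i j k l =
  (match nat_of_ord l with 0 => i | 1 => j | 3 => k | _ => 0 end)%N.
Proof. by rewrite mnmE. Qed.

Lemma mono0 i j k : mono i j k (inord 0) = i. Proof. by rewrite mnmE inordK. Qed.
Lemma mono0' i j k : mono i j k ord0 = i. Proof. by rewrite mnmE. Qed.
Lemma mono1 i j k : mono i j k (inord 1) = j. Proof. by rewrite mnmE inordK. Qed.
Lemma mono2 i j k : mono i j k (inord 2) = 0%N. Proof. by rewrite mnmE inordK. Qed.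
Lemma mono3 i j k : mono i j k (inord 3) = k. Proof. by rewrite mnmE inordK. Qed.
Lemma mono4 i j k : mono i j k (inord 4) = 0%N. Proof. by rewrite mnmE inordK. Qed.

Lemma ordE k (hl : (k < 5)%N) : Ordinal hl = inord k.
Proof. by apply/val_inj; rewrite /= inordK. Qed.

Lemma mono_eta (mo : 'X_{1..5}) : mo (inord 2) = 0%N -> mo (inord 4) = 0%N ->
  mo = mono (mo (inord 0)) (mo (inord 1)) (mo (inord 3)).
Proof.
move=> h2 h4; apply/mnmP => l; rewrite monoE.
destruct l as [l hl]; destruct l as [|[|[|[|[|l]]]]]; rewrite /= ?ordE //.
Qed.

Lemma inI0 (K : fieldType) k (g : 'I_k -> {mpoly K[5]}) : in_ideal g 0.
Proof. by exists (fun _ => 0); rewrite big1 // => i _; rewrite mul0r. Qed.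

Lemma inID (K : fieldType) k (g : 'I_k -> {mpoly K[5]}) f1 f2 :
  in_ideal g f1 -> in_ideal g f2 -> in_ideal g (f1 + f2).
Proof.
move=> [c1 ->] [c2 ->]; exists (fun i => c1 i + c2 i); rewrite -big_split.
by apply: eq_bigr => i _; rewrite mulrDl.
Qed.

Lemma inIM (K : fieldType) k (g : 'I_k -> {mpoly K[5]}) h f :
  in_ideal g f -> in_ideal g (h * f).
Proof.
move=> [c ->]; exists (fun i => h * c i); rewrite mulr_sumr.
by apply: eq_bigr => i _; rewrite mulrA.
Qed.

Lemma inIZ (K : fieldType) k (g : 'I_k -> {mpoly K[5]}) (x : K) f :
  in_ideal g f -> in_ideal g (x *: f).
Proof. by rewrite -mul_mpolyC; apply: inIM. Qed.

Lemma inIB (K : fieldType) k (g : 'I_k -> {mpoly K[5]}) f1 f2 :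
  in_ideal g f1 -> in_ideal g f2 -> in_ideal g (f1 - f2).
Proof. by move=> h1 h2; apply: inID => //; rewrite -mulN1r; apply: inIM. Qed.

Lemma inIg (K : fieldType) k (g : 'I_k -> {mpoly K[5]}) i : in_ideal g (g i).
Proof.
exists (fun j => (j == i)%:R); rewrite (bigD1 i) //= eqxx mul1r big1 ?addr0 //.
by move=> j /negbTE ->; rewrite mul0r.
Qed.

Lemma inI_X (K : fieldType) k (g : 'I_k -> {mpoly K[5]}) i m0 mo :
  g i = 'X_[m0] -> (m0 <= mo)%MM -> in_ideal g 'X_[mo].
Proof.
move=> hg hle; rewrite -(submK hle) mpolyXD -hg; apply: inIM; apply: inIg.
Qed.

Lemma coefMX0 (K : fieldType) (c : {mpoly K[5]}) (m k : 'X_{1..5}) l :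
  (k l < m l)%N -> (c * 'X_[m])@_k = 0.
Proof.
move=> h; apply: memN_msupp_eq0; apply/negP.
rewrite (perm_mem (msuppMX c m)) => /mapP [m' _ ek]; move: h; rewrite ek mnmDE; lia.
Qed.

Lemma mdeg_ge (mo : 'X_{1..5}) l : (mo l <= mdeg mo)%N.
Proof. by rewrite mdegE (bigD1 l) //= leq_addr. Qed.

Lemma inord_eq i j : (i < 5)%N -> (j < 5)%N -> ((inord i : 'I_5) == inord j) = (i == j).
Proof. by move=> hi hj; rewrite -val_eqE /= !inordK. Qed.

Lemma G0E (K : fieldType) p q a (s : K) :
  Jgens p q a s (@Ordinal 4 0 isT) = 'X_[U_(inord 0) *+ (q - p)].
Proof. by rewrite /Jgens /= mpolyXn. Qed.
Lemma G1E (K : fieldType) p q a (s : K) :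
  Jgens p q a s (@Ordinal 4 1 isT) = 'X_[U_(inord 2)].
Proof. by []. Qed.
Lemma G2E (K : fieldType) p q a (s : K) :
  Jgens p q a s (@Ordinal 4 2 isT) = 'X_[U_(inord 4)].
Proof. by []. Qed.
Lemma G3E (K : fieldType) p q a (s : K) :
  Jgens p q a s (@Ordinal 4 3 isT) = s%:MP - 'X_[mono 0 (a * q) (a * p)].
Proof.
rewrite /Jgens /= !mpolyXn -mpolyXD; congr (_ - 'X_[_]); apply/mnmP => l.
rewrite mnmDE !mulmnE !mnm1E monoE.
destruct l as [l hl]; destruct l as [|[|[|[|[|l]]]]]; rewrite /= ?ordE // !inord_eq //= ?mul0n ?mul1n ?addn0 ?add0n //.
Qed.

Definition mt (i0 j0 k0 A B t : nat) : 'X_{1..5} := mono i0 (j0 + t * A) (k0 + t * B).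

Lemma mt_succ i0 j0 k0 A B t :
  mt i0 j0 k0 A B t.+1 = (mono 0 A B + mt i0 j0 k0 A B t)%MM.
Proof.
apply/mnmP => l; rewrite mnmDE /mt !monoE.
destruct l as [l hl]; destruct l as [|[|[|[|[|l]]]]]; rewrite /= ?mulSn; lia.
Qed.

Lemma ray_in (K : fieldType) p q a (s : K) i0 j0 k0 t :
  in_ideal (Jgens p q a s)
    ('X_[mt i0 j0 k0 (a * q) (a * p) t] - s ^+ t *: 'X_[mt i0 j0 k0 (a * q) (a * p) 0]).
Proof.
elim: t => [|t IH]; first by rewrite expr0 scale1r subrr; apply: inI0.
rewrite mt_succ mpolyXD.
set XR := 'X_[mono 0 (a * q) (a * p)].
set XT := 'X_[mt _ _ _ _ _ t]. set X0 := 'X_[mt _ _ _ _ _ 0].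
have -> : XR * XT - s ^+ t.+1 *: X0 =
   (-1) * (Jgens p q a s (@Ordinal 4 3 isT) * XT) + s%:MP * (XT - s ^+ t *: X0).
  rewrite G3E -/XR -!mul_mpolyC !rmorphXn /=.
by rewrite mulN1r mulrBl opprB mulrBr mulrA -exprS addrA subrK.
rewrite [_ * XT]mulrC; apply: inID; first by apply: inIM; apply: inIM; apply: inIg.
by apply: inIM.
Qed.

Definition Lf (K : fieldType) (s : K) (f0 : nat -> 'X_{1..5}) N (f : {mpoly K[5]}) : K :=
  \sum_(t < N) s ^+ t * f@_(f0 t).
Arguments Lf {K}.

Lemma Lf_sum (K : fieldType) (s : K) f0 N k (F : 'I_k -> {mpoly K[5]}) :
  Lf s f0 N (\sum_(i < k) F i) = \sum_(i < k) Lf s f0 N (F i).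
Proof.
rewrite /Lf exchange_big /=; apply: eq_bigr => t _.
by rewrite (raddf_sum (mcoeff _)) mulr_sumr.
Qed.

Lemma Lf_gen (K : fieldType) p q a (s : K) i0 j0 k0 (c : {mpoly K[5]}) (i : 'I_4) M :
  (0 < p)%N -> (p < q)%N -> (0 < a)%N -> (i0 < q - p)%N ->
  ~~ ((a * q <= j0) && (a * p <= k0))%N -> (msize c <= M)%N ->
  Lf s (mt i0 j0 k0 (a * q) (a * p)) M.+1 (c * Jgens p q a s i) = 0.
Proof.
move=> hp hpq ha hi0 hmin hc.
set mtt := mt i0 j0 k0 (a * q) (a * p).
destruct i as [i hi]; destruct i as [|[|[|[|i]]]].
- have -> : Ordinal hi = Ordinal (isT : (0 < 4)%N) by apply: val_inj.
  rewrite G0E /Lf big1 // => t _.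
  rewrite (@coefMX0 _ _ _ _ (inord 0)) ?mulr0 // mulmnE mnm1E eqxx mul1n /mtt /mt mono0 //.
- have -> : Ordinal hi = Ordinal (isT : (1 < 4)%N) by apply: val_inj.
  rewrite G1E /Lf big1 // => t _.
  by rewrite (@coefMX0 _ _ _ _ (inord 2)) ?mulr0 // mnm1E eqxx /mtt /mt mono2.
- have -> : Ordinal hi = Ordinal (isT : (2 < 4)%N) by apply: val_inj.
  rewrite G2E /Lf big1 // => t _.
  by rewrite (@coefMX0 _ _ _ _ (inord 4)) ?mulr0 // mnm1E eqxx /mtt /mt mono4.
- have -> : Ordinal hi = Ordinal (isT : (3 < 4)%N) by apply: val_inj.
  have cE : forall mo, (c * Jgens p q a s (Ordinal (isT : (3 < 4)%N)))@_mo =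
      s * c@_mo - (c * 'X_[mono 0 (a * q) (a * p)])@_mo.
    by move=> mo; rewrite G3E mulrBr mcoeffB [c * s%:MP]mulrC mul_mpolyC mcoeffZ.
  have key : forall M, Lf s mtt M.+1 (c * Jgens p q a s (Ordinal (isT : (3 < 4)%N))) =
                       s ^+ M.+1 * c@_(mtt M).
    elim=> [|M' IH].
      rewrite /Lf big_ord1 expr0 mul1r cE expr1.
      move: hmin; rewrite negb_and -!ltnNge => /orP [] h.
      + by rewrite (@coefMX0 _ _ _ _ (inord 1)) ?subr0 // /mtt /mt /= !mono1; lia.
      + by rewrite (@coefMX0 _ _ _ _ (inord 3)) ?subr0 // /mtt /mt /= !mono3; lia.
    rewrite /Lf in IH; rewrite /Lf big_ord_recr /= IH.
    rewrite cE (_ : mtt M'.+1 = (mono 0 (a * q) (a * p) + mtt M')%MM) ?mcoeffMX; last exact: mt_succ.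
    rewrite (exprS s M'.+1); set S := s ^+ M'.+1; ring.
  rewrite key (@memN_msupp_eq0 _ _ c) ?mulr0 //.
  apply: msize_mdeg_ge; apply: (leq_trans hc); apply: (leq_trans _ (mdeg_ge _ (inord 1))).
  rewrite /mtt /mt mono1. 
  have : (1 <= a * q)%N by rewrite muln_gt0 ha; lia.
  nia.
- by move: hi.
Qed.

Lemma Lf_X0 (K : fieldType) (s : K) i0 j0 k0 A B N : (0 < A)%N ->
  Lf s (mt i0 j0 k0 A B) N.+1 'X_[mt i0 j0 k0 A B 0] = 1.
Proof.
move=> hA; rewrite /Lf big_ord_recl /= expr0 mul1r mcoeffX eqxx big1 ?addr0 // => t _.
rewrite mcoeffX; case: eqP => [h|_]; last by rewrite mulr0.
exfalso; move: (congr1 (fun m : 'X_{1..5} => m (inord 1)) h); rewrite /mt !mono1 /=; rewrite /bump /= add1n; nia.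
Qed.

Lemma wdegZ_mono p q i j k :
  wdegZ p q (mono i j k) = i%:Z - p%:Z * j%:Z + q%:Z * k%:Z.
Proof. by rewrite /wdegZ mono0' mono1 mono2 mono3 mono4 !addr0. Qed.

Lemma wdegZm_mono i j k : wdegZm (mono i j k) = k%:Z - j%:Z.
Proof. by rewrite /wdegZm mono1 mono2 mono3 mono4 !addr0 addrC. Qed.

Theorem theorem4p2 (C : numClosedFieldType) (p q m : nat)
    (hp : (0 < p)%N) (hpq : (p < q)%N) (hcop : coprime p q)
    (hm : (0 < m)%N) (hdiv : (q - p %| m)%N) :
  let a := (m %/ (q - p))%N in
  forall (s : C) (n d : int),
    graded_quot_dim1 (in_ideal (Jgens p q a s)) (homog_of p q m n d).
Proof.
move=> a s n d.
have hr : (0 < q - p)%N by rewrite subn_gt0.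
have hm' : m = (a * (q - p))%N by rewrite /a divnK.
have ha : (0 < a)%N by move: hm; rewrite hm' muln_gt0 => /andP [].
have hmZ : m%:Z = a%:Z * (q%:Z - p%:Z) by rewrite hm' PoszM subzn // ltnW.
have [i0 [j0 [k0 [hs0 hmin hall]]]] := sol_min p q a n d hp hpq ha.
have haq : (0 < a * q)%N by rewrite muln_gt0 ha /=; lia.
set mtt := mt i0 j0 k0 (a * q) (a * p).
exists 'X_[mtt 0]; split.
- move=> mo; rewrite msuppX mem_seq1 => /eqP ->.
  case: hs0 => [_ [e1 [v e2]]].
  rewrite /mtt /mt !mul0n !addn0 wdegZ_mono wdegZm_mono; split => //.
  by apply/eqP; rewrite eqz_mod_dvd; apply/dvdzP; exists v; rewrite e2 hmZ.
- move=> [c hc].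
  have := congr1 (Lf s mtt (\sum_(i < 4) msize (c i)).+1) hc.
  rewrite Lf_X0 // Lf_sum big1; first by move/eqP; rewrite oner_eq0.
  move=> i _; case: (hs0) => [hi _].
  apply: Lf_gen => //.
  by rewrite (bigD1 i) //= leq_addr.
- move=> h hh.
  have mono_in : forall mo, mo \in msupp h ->
      exists c', in_ideal (Jgens p q a s) ('X_[mo] - c' *: 'X_[mtt 0]).
    move=> mo hmo.
    case: (boolP (mo (inord 2) == 0%N)) => h2; last first.
      exists 0; rewrite scale0r subr0.
      by apply: (@inI_X _ _ _ _ _ _ (G1E _ p q a s)); rewrite lep1mP.
    case: (boolP (mo (inord 4) == 0%N)) => h4; last first.
      exists 0; rewrite scale0r subr0.
      by apply: (@inI_X _ _ _ _ _ _ (G2E _ p q a s)); rewrite lep1mP.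
    case: (leqP (q - p) (mo (inord 0))) => h0.
      exists 0; rewrite scale0r subr0.
      apply: (@inI_X _ _ _ _ _ _ (G0E _ p q a s)); apply/mnm_lepP => l; rewrite mulmnE mnm1E.
      by case: eqP => [<-|_]; [rewrite mul1n | rewrite mul0n].
    move/eqP: h2 => h2; move/eqP: h4 => h4.
    have [hw hwm] := hh mo hmo.
    rewrite (mono_eta _ h2 h4) wdegZ_mono in hw.
    rewrite (mono_eta _ h2 h4) wdegZm_mono in hwm.
    have hs : sol p q a n d (mo (inord 0)) (mo (inord 1)) (mo (inord 3)).
      split => //; split => //.
      by move/eqP: hwm; rewrite eqz_mod_dvd => /dvdzP [v hv]; exists v; rewrite hv hmZ.
    rewrite (mono_eta _ h2 h4).
    have [-> [t [-> ->]]] := hall _ _ _ hs.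
    by exists (s ^+ t); exact: (ray_in _ p q a s i0 j0 k0 t).
  have gen : forall r : seq 'X_{1..5}, {subset r <= msupp h} ->
      exists c, in_ideal (Jgens p q a s)
        (\sum_(mo <- r) h@_mo *: 'X_[mo] - c *: 'X_[mtt 0]).
    elim => [|mo r IH] hsub.
      by exists 0; rewrite big_nil scale0r subr0; apply: inI0.
    have [c1 h1] := mono_in mo (hsub mo (mem_head _ _)).
    have [c2 h2] : exists c, in_ideal (Jgens p q a s)
        (\sum_(mo <- r) h@_mo *: 'X_[mo] - c *: 'X_[mtt 0]).
      by apply: IH => x hx; apply: hsub; rewrite in_cons hx orbT.
    exists (h@_mo * c1 + c2); rewrite big_cons.
    set S := \sum_(_ <- r) _.
    have -> : h@_mo *: 'X_[mo] + S - (h@_mo * c1 + c2) *: 'X_[mtt 0] =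
        h@_mo *: ('X_[mo] - c1 *: 'X_[mtt 0]) + (S - c2 *: 'X_[mtt 0]).
      by rewrite -!mul_mpolyC rmorphD rmorphM /=; ring.
    by apply: inID => //; apply: inIZ.
  have [c hc] := gen (msupp h) (fun x hx => hx).
  by exists c; rewrite {1}(mpolyE h).
Qed.
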